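(* Let $\mathcal{C}$ be a pre-Hilbert $*$-category and $A$ an object of $\mathcal{C}$. Then: (1) $\mathcal{C}(A,A)$, with addition from the unique enrichment of $\mathcal{C}$ in abelian groups, multiplication given by composition, involution given by the restriction of the involution of $\mathcal{C}$, and positive cone $\mathcal{C}(A,A)_+ = \{x^*x : x\in\mathcal{C}(A,X) \text{ for some object } X\}$, is an ordered $*$-ring; (2) for each object $X$, $\mathcal{C}(A,X)$, with addition from the enrichment and right scalar multiplication by $\mathcal{C}(A,A)$ given by composition, is an inner product right $\mathcal{C}(A,A)$-module with inner product $\langle x,y\rangle = x^*y$; (3) for each morphism $f\colon X\to Y$ of $\mathcal{C}$, the map $\mathcal{C}(A,f)\colon \mathcal{C}(A,X)\to\mathcal{C}(A,Y)$, $x\mapsto fx$, is adjointable with adjoint $\mathcal{C}(A,f^* )$. Consequently the hom-functor $\mathcal{C}(A,-)$ factors through the forgetful functor $\mathbf{InnerProd}_{\mathcal{C}(A,A)}\to\mathbf{Set}$ via a $*$-functor $\mathcal{C}\to\mathbf{InnerProd}_{\mathcal{C}(A,A)}$.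
   Context: A $*$-category is a category with a choice of $f^*\colon Y\to X$ for each $f\colon X\to Y$ such that $1^*=1$, $(gf)^*=f^*g^*$, $(f^* )^*=f$; a $*$-functor is a functor $F$ between $*$-categories with $F(f^* )=(Ff)^*$. A pre-Hilbert $*$-category is a $*$-category with (R1) a zero object, (R2) orthonormal biproducts of all pairs of objects (biproducts $(X,s_1,r_1,s_2,r_2)$ with $r_k=s_k^*$), (R3) an isometric kernel (kernel $m$ with $m^*m=1$) for every morphism, and (R4) every diagonal $\Delta\colon X\to X\oplus X$ a kernel of some morphism; such a category is additive. A $*$-ring is a ring $R$ with a map $r\mapsto r^*$ satisfying $1^*=1$, $(sr)^*=r^*s^*$, $(r^* )^*=r$, $(r+s)^*=r^*+s^*$; it is anisotropic if $r^*r=0$ implies $r=0$. $R_{\mathrm{sa}}$ denotes the set of Hermitian elements ($a^*=a$). A positive cone on $R$ is a subset $P\subseteq R_{\mathrm{sa}}$ with $1\in P$, $P+P\subseteq P$, $r^*Pr\subseteq P$ for all $r\in R$, and $P\cap -P=\{0\}$. An ordered $*$-ring is an anisotropic $*$-ring with a positive cone $R_+$ (equivalently the order $a\le b$ iff $b-a\in R_+$). For an ordered $*$-ring $R$ and right $R$-module $X$, an inner product is a map $\langle-,-\rangle\colon X\times X\to R$ with $\langle x,yr+z\rangle=\langle x,y\rangle r+\langle x,z\rangle$, $\langle x,y\rangle^*=\langle y,x\rangle$, $\langle x,x\rangle\in R_+$, and $\langle x,x\rangle=0\Rightarrow x=0$. A function $f\colon X\to Y$ between inner product $R$-modules is adjointable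 if there is $f^*\colon Y\to X$ with $\langle f^*y,x\rangle=\langle y,fx\rangle$ for all $x,y$. $\mathbf{InnerProd}_R$ is the $*$-category of inner product $R$-modules and adjointable maps. *)

(* Defs.v *)
From Stdlib Require Import ClassicalEpsilon.

Record Category := {
  Obj : Type;
  Hom : Obj -> Obj -> Type;
  idm : forall X, Hom X X;
  comp : forall X Y Z, Hom Y Z -> Hom X Y -> Hom X Z;
  comp_id_l : forall X Y (f : Hom X Y), comp X Y Y (idm Y) f = f;
  comp_id_r : forall X Y (f : Hom X Y), comp X X Y f (idm X) = f;
  comp_assoc : forall W X Y Z (h : Hom Y Z) (g : Hom X Y) (f : Hom W X),
      comp W Y Z h (comp W X Y g f) = comp W X Z (comp X Y Z h g) f
}.
Arguments idm {C} X : rename.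
Arguments comp {C X Y Z} g f : rename.
Arguments Hom {C} X Y : rename.
Notation "g ∘ f" := (comp g f) (at level 40, left associativity).

Record StarCategory := {
  sc_cat :> Category;
  star : forall (X Y : Obj sc_cat), Hom X Y -> Hom Y X;
  star_id : forall X, star X X (idm X) = idm X;
  star_comp : forall X Y Z (g : Hom Y Z) (f : Hom X Y),
      star X Z (g ∘ f) = star X Y f ∘ star Y Z g;
  star_star : forall X Y (f : Hom X Y), star Y X (star X Y f) = f
}.
Arguments star {s X Y} f : rename.

Set Implicit Arguments.
Unset Strict Implicit.

Definition is_zero_object (C : Category) (Z : Obj C) : Prop :=
  (forall X : Obj C, exists f : Hom X Z, forall g : Hom X Z, g = f) /\
  (forall X : Obj C, exists f : Hom Z X, forall g : Hom Z X, g = f).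

Definition zmor (C : Category) (Z : Obj C) (HZ : is_zero_object Z)
  (X Y : Obj C) : Hom X Y :=
  proj1_sig (constructive_indefinite_description _ (proj2 HZ Y))
  ∘ proj1_sig (constructive_indefinite_description _ (proj1 HZ X)).

Definition is_biproduct (C : Category) (z : forall X Y : Obj C, Hom X Y)
  (X1 X2 B : Obj C) (s1 : Hom X1 B) (r1 : Hom B X1)
  (s2 : Hom X2 B) (r2 : Hom B X2) : Prop :=
  r1 ∘ s1 = idm X1 /\ r2 ∘ s2 = idm X2 /\
  r2 ∘ s1 = z X1 X2 /\ r1 ∘ s2 = z X2 X1 /\
  (forall W (f1 : Hom W X1) (f2 : Hom W X2),
      exists h : Hom W B, r1 ∘ h = f1 /\ r2 ∘ h = f2 /\
        forall h' : Hom W B, r1 ∘ h' = f1 -> r2 ∘ h' = f2 -> h' = h) /\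
  (forall W (g1 : Hom X1 W) (g2 : Hom X2 W),
      exists h : Hom B W, h ∘ s1 = g1 /\ h ∘ s2 = g2 /\
        forall h' : Hom B W, h' ∘ s1 = g1 -> h' ∘ s2 = g2 -> h' = h).

Definition is_orth_biproduct (C : StarCategory) (z : forall X Y : Obj C, Hom X Y)
  (X1 X2 B : Obj C) (s1 : Hom X1 B) (r1 : Hom B X1)
  (s2 : Hom X2 B) (r2 : Hom B X2) : Prop :=
  is_biproduct z s1 r1 s2 r2 /\ r1 = star s1 /\ r2 = star s2.

Definition is_kernel (C : Category) (z : forall X Y : Obj C, Hom X Y)
  (X Y K : Obj C) (f : Hom X Y) (m : Hom K X) : Prop :=
  f ∘ m = z K Y /\
  forall W (g : Hom W X), f ∘ g = z W Y ->
    exists h : Hom W K, m ∘ h = g /\ forall h' : Hom W K, m ∘ h' = g -> h' = h.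

Record PreHilbert := {
  ph_sc :> StarCategory;
  ph_zero : Obj ph_sc;
  ph_zero_is : is_zero_object ph_zero;
  ph_biprod : forall X1 X2 : Obj ph_sc,
    exists B s1 r1 s2 r2,
      @is_orth_biproduct ph_sc (zmor ph_zero_is) X1 X2 B s1 r1 s2 r2;
  ph_kernel : forall (X Y : Obj ph_sc) (f : Hom X Y),
    exists K (m : Hom K X),
      is_kernel (zmor ph_zero_is) f m /\ star m ∘ m = idm K;
  ph_diag : forall (X B : Obj ph_sc) s1 r1 s2 r2,
    @is_orth_biproduct ph_sc (zmor ph_zero_is) X X B s1 r1 s2 r2 ->
    forall d : Hom X B, r1 ∘ d = idm X -> r2 ∘ d = idm X ->
      exists (Z : Obj ph_sc) (g : Hom B Z), is_kernel (zmor ph_zero_is) g d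
}.

Definition phz (C : PreHilbert) (X Y : Obj C) : Hom X Y :=
  zmor (ph_zero_is C) X Y.

(* h = f + g in the (unique) enrichment in abelian groups:
   h = [1,1] ∘ <f,g> for a biproduct Y ⊕ Y *)
Definition is_sum (C : PreHilbert) (X Y : Obj C) (f g h : Hom X Y) : Prop :=
  exists B (s1 : Hom Y B) r1 s2 r2,
    is_biproduct (@phz C) s1 r1 s2 r2 /\
    exists (p : Hom X B) (c : Hom B Y),
      r1 ∘ p = f /\ r2 ∘ p = g /\ c ∘ s1 = idm Y /\ c ∘ s2 = idm Y /\ h = c ∘ p.

Definition phadd (C : PreHilbert) (X Y : Obj C) (f g : Hom X Y) : Hom X Y :=
  epsilon (inhabits f) (fun h => is_sum f g h).

Definition is_abelian_group (M : Type) (zero : M) (add : M -> M -> M) : Prop :=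
  (forall x y z, add x (add y z) = add (add x y) z) /\
  (forall x y, add x y = add y x) /\
  (forall x, add zero x = x) /\
  (forall x, exists y, add x y = zero).

Definition is_star_ring (R : Type) (zero one : R) (add mul : R -> R -> R)
  (st : R -> R) : Prop :=
  is_abelian_group zero add /\
  (forall x y z, mul x (mul y z) = mul (mul x y) z) /\
  (forall x, mul one x = x) /\ (forall x, mul x one = x) /\
  (forall x y z, mul x (add y z) = add (mul x y) (mul x z)) /\
  (forall x y z, mul (add x y) z = add (mul x z) (mul y z)) /\
  st one = one /\
  (forall r s, st (mul s r) = mul (st r) (st s)) /\
  (forall r, st (st r) = r) /\
  (forall r s, st (add r s) = add (st r) (st s)).

Definition is_anisotropic (R : Type) (zero : R) (mul : R -> R -> R) (st : R -> R) :=
  forall r, mul (st r) r = zero -> r = zero.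

(* P is a positive cone; "P ∩ -P = {0}" is written: a, b ∈ P, a + b = 0 ⇒ a = 0 *)
Definition is_positive_cone (R : Type) (zero one : R) (add mul : R -> R -> R)
  (st : R -> R) (P : R -> Prop) : Prop :=
  (forall a, P a -> st a = a) /\
  P one /\
  (forall a b, P a -> P b -> P (add a b)) /\
  (forall r a, P a -> P (mul (mul (st r) a) r)) /\
  (forall a b, P a -> P b -> add a b = zero -> a = zero).

Definition is_ordered_star_ring (R : Type) (zero one : R) (add mul : R -> R -> R)
  (st : R -> R) (P : R -> Prop) : Prop :=
  is_star_ring zero one add mul st /\ is_anisotropic zero mul st /\
  is_positive_cone zero one add mul st P.

Definition is_right_module (R : Type) (one : R) (addR mulR : R -> R -> R)
  (M : Type) (zero : M) (add : M -> M -> M) (act : M -> R -> M) : Prop :=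
  is_abelian_group zero add /\
  (forall x y r, act (add x y) r = add (act x r) (act y r)) /\
  (forall x r s, act x (addR r s) = add (act x r) (act x s)) /\
  (forall x r s, act x (mulR r s) = act (act x r) s) /\
  (forall x, act x one = x).

Definition is_inner_product (R : Type) (zeroR : R) (addR mulR : R -> R -> R)
  (st : R -> R) (P : R -> Prop)
  (M : Type) (zero : M) (add : M -> M -> M) (act : M -> R -> M)
  (ip : M -> M -> R) : Prop :=
  (forall x y z r, ip x (add (act y r) z) = addR (mulR (ip x y) r) (ip x z)) /\
  (forall x y, st (ip x y) = ip y x) /\
  (forall x, P (ip x x)) /\
  (forall x, ip x x = zeroR -> x = zero).

Definition is_inner_product_module (R : Type) (zeroR oneR : R)
  (addR mulR : R -> R -> R) (st : R -> R) (P : R -> Prop)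
  (M : Type) (zero : M) (add : M -> M -> M) (act : M -> R -> M)
  (ip : M -> M -> R) : Prop :=
  is_right_module oneR addR mulR zero add act /\
  is_inner_product zeroR addR mulR st P zero add act ip.

Definition is_adjoint (R M N : Type) (ipM : M -> M -> R) (ipN : N -> N -> R)
  (F : M -> N) (G : N -> M) : Prop :=
  forall (y : N) (x : M), ipM (G y) x = ipN y (F x).

(* Main.v *)
Require Import Defs.
From Stdlib Require Import ClassicalEpsilon.
Set Implicit Arguments.
Unset Strict Implicit.

Lemma zmor_char (C : PreHilbert) (X Y : Obj C) (g : Hom X (ph_zero C)) (h : Hom (ph_zero C) Y) :
  phz X Y = h ∘ g.
Proof.
  unfold phz, zmor.
  destruct (constructive_indefinite_description _ (proj2 (ph_zero_is C) Y)) as [tY HY].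
  destruct (constructive_indefinite_description _ (proj1 (ph_zero_is C) X)) as [tX HX].
  simpl. rewrite (HY h), (HX g). reflexivity.
Qed.

Lemma zero_ex (C : PreHilbert) (X Y : Obj C) :
  exists (g : Hom X (ph_zero C)) (h : Hom (ph_zero C) Y), phz X Y = h ∘ g.
Proof.
  destruct (proj1 (ph_zero_is C) X) as [g _].
  destruct (proj2 (ph_zero_is C) Y) as [h _].
  exists g, h. apply zmor_char.
Qed.

Lemma zr (C : PreHilbert) (X Y W : Obj C) (f : Hom W X) : phz X Y ∘ f = phz W Y.
Proof.
  destruct (zero_ex X Y) as [g [h ->]].
  rewrite <- comp_assoc. symmetry. apply zmor_char.
Qed.

Lemma zl (C : PreHilbert) (X Y W : Obj C) (f : Hom Y W) : f ∘ phz X Y = phz X W.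
Proof.
  destruct (zero_ex X Y) as [g [h ->]].
  rewrite comp_assoc. symmetry. apply zmor_char.
Qed.

Lemma zstar (C : PreHilbert) (X Y : Obj C) : star (phz X Y) = phz Y X.
Proof.
  destruct (zero_ex X Y) as [g [h ->]].
  rewrite star_comp. symmetry. apply zmor_char.
Qed.

Lemma bp_pair_ex (C : PreHilbert) (X1 X2 B : Obj C) s1 r1 s2 r2 :
  @is_biproduct C (@phz C) X1 X2 B s1 r1 s2 r2 ->
  forall W (f1 : Hom W X1) (f2 : Hom W X2), exists h, r1 ∘ h = f1 /\ r2 ∘ h = f2.
Proof.
  intros (_&_&_&_&H&_) W f1 f2. destruct (H W f1 f2) as [h [? [? _]]]. eauto.
Qed.

Lemma bp_copair_ex (C : PreHilbert) (X1 X2 B : Obj C) s1 r1 s2 r2 :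
  @is_biproduct C (@phz C) X1 X2 B s1 r1 s2 r2 ->
  forall W (f1 : Hom X1 W) (f2 : Hom X2 W), exists h, h ∘ s1 = f1 /\ h ∘ s2 = f2.
Proof.
  intros (_&_&_&_&_&H) W f1 f2. destruct (H W f1 f2) as [h [? [? _]]]. eauto.
Qed.

Lemma bp_pair_un (C : PreHilbert) (X1 X2 B : Obj C) s1 r1 s2 r2 :
  @is_biproduct C (@phz C) X1 X2 B s1 r1 s2 r2 ->
  forall W (h h' : Hom W B), r1 ∘ h = r1 ∘ h' -> r2 ∘ h = r2 ∘ h' -> h = h'.
Proof.
  intros (_&_&_&_&H&_) W h h' E1 E2. destruct (H W (r1 ∘ h) (r2 ∘ h)) as [k [_ [_ U]]].
  rewrite (U h), (U h'); auto.
Qed.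

Lemma bp_copair_un (C : PreHilbert) (X1 X2 B : Obj C) s1 r1 s2 r2 :
  @is_biproduct C (@phz C) X1 X2 B s1 r1 s2 r2 ->
  forall W (h h' : Hom B W), h ∘ s1 = h' ∘ s1 -> h ∘ s2 = h' ∘ s2 -> h = h'.
Proof.
  intros (_&_&_&_&_&H) W h h' E1 E2. destruct (H W (h ∘ s1) (h ∘ s2)) as [k [_ [_ U]]].
  rewrite (U h), (U h'); auto.
Qed.

Lemma bp_exists (C : PreHilbert) (X1 X2 : Obj C) :
  exists B (s1 : Hom X1 B) r1 (s2 : Hom X2 B) r2,
    @is_biproduct C (@phz C) X1 X2 B s1 r1 s2 r2 /\ r1 = star s1 /\ r2 = star s2.
Proof.
  destruct (ph_biprod X1 X2) as (B&s1&r1&s2&r2&H). exists B, s1, r1, s2, r2. exact H.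
Qed.

Lemma sum_unique (C : PreHilbert) (X Y : Obj C) (f g h1 h2 : Hom X Y) :
  is_sum f g h1 -> is_sum f g h2 -> h1 = h2.
Proof.
  intros [B [s1 [r1 [s2 [r2 [Hb [p [c (Hp1&Hp2&Hc1&Hc2&->)]]]]]]]].
  intros [B' [s1' [r1' [s2' [r2' [Hb' [p' [c' (Hp1'&Hp2'&Hc1'&Hc2'&->)]]]]]]]].
  pose proof Hb as (E11&E22&E21&E12&_&_).
  pose proof Hb' as (E11'&E22'&E21'&E12'&_&_).
  destruct (bp_pair_ex Hb' r1 r2) as [phi [F1 F2]].
  assert (S1 : phi ∘ s1 = s1').
  { apply (bp_pair_un Hb'); rewrite comp_assoc; [rewrite F1, E11, E11'|rewrite F2, E21, E21']; reflexivity. }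
  assert (S2 : phi ∘ s2 = s2').
  { apply (bp_pair_un Hb'); rewrite comp_assoc; [rewrite F1, E12, E12'|rewrite F2, E22, E22']; reflexivity. }
  assert (Hc : c' ∘ phi = c).
  { apply (bp_copair_un Hb); rewrite <- comp_assoc; [rewrite S1, Hc1, Hc1'|rewrite S2, Hc2, Hc2']; reflexivity. }
  assert (Hp : p' = phi ∘ p).
  { apply (bp_pair_un Hb'); rewrite comp_assoc; [rewrite F1, Hp1, Hp1'|rewrite F2, Hp2, Hp2']; reflexivity. }
  rewrite Hp, comp_assoc, Hc. reflexivity.
Qed.

Lemma sum_nabla (C : PreHilbert) (X Y B : Obj C) s1 r1 s2 r2 :
  @is_biproduct C (@phz C) Y Y B s1 r1 s2 r2 ->
  forall (f g : Hom X Y) (p : Hom X B) (c : Hom B Y),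
  r1 ∘ p = f -> r2 ∘ p = g -> c ∘ s1 = idm Y -> c ∘ s2 = idm Y -> phadd f g = c ∘ p.
Proof.
  intros Hb f g p c H1 H2 H3 H4.
  assert (Hs : is_sum f g (c ∘ p)).
  { exists B, s1, r1, s2, r2. split; [exact Hb|]. exists p, c. auto. }
  apply (@sum_unique C X Y f g (phadd f g) (c ∘ p)); [|exact Hs]. unfold phadd.
  apply epsilon_spec. eauto.
Qed.

Lemma sum_matrix (C : PreHilbert) (X1 X2 B W V : Obj C) s1 r1 s2 r2 :
  @is_biproduct C (@phz C) X1 X2 B s1 r1 s2 r2 ->
  forall (a : Hom X1 V) (b : Hom X2 V) (u : Hom W X1) (v : Hom W X2) (q : Hom B V) (p : Hom W B),
  q ∘ s1 = a -> q ∘ s2 = b -> r1 ∘ p = u -> r2 ∘ p = v -> phadd (a ∘ u) (b ∘ v) = q ∘ p.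
Proof.
  intros Hb a b u v q p Q1 Q2 P1 P2.
  pose proof Hb as (E11&E22&E21&E12&_&_).
  destruct (bp_exists V V) as (B'&s1'&r1'&s2'&r2'&Hb'&_&_).
  pose proof Hb' as (E11'&E22'&E21'&E12'&_&_).
  destruct (bp_pair_ex Hb' (a ∘ r1) (b ∘ r2)) as [M [M1 M2]].
  destruct (bp_copair_ex Hb' (idm V) (idm V)) as [c [C1 C2]].
  assert (S1 : M ∘ s1 = s1' ∘ a).
  { apply (bp_pair_un Hb'); rewrite !comp_assoc; [rewrite M1, E11'|rewrite M2, E21'];
    rewrite <- comp_assoc; [rewrite E11|rewrite E21];
    rewrite ?comp_id_l, ?comp_id_r, ?zl, ?zr; reflexivity. }
  assert (S2 : M ∘ s2 = s2' ∘ b).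
  { apply (bp_pair_un Hb'); rewrite !comp_assoc; [rewrite M1, E12'|rewrite M2, E22'];
    rewrite <- comp_assoc; [rewrite E12|rewrite E22];
    rewrite ?comp_id_l, ?comp_id_r, ?zl, ?zr; reflexivity. }
  assert (Hq : c ∘ M = q).
  { apply (bp_copair_un Hb); rewrite <- comp_assoc; [rewrite S1, comp_assoc, C1, Q1|rewrite S2, comp_assoc, C2, Q2];
    rewrite comp_id_l; reflexivity. }
  rewrite <- Hq, <- comp_assoc.
  apply (sum_nabla Hb'); auto; rewrite comp_assoc; [rewrite M1|rewrite M2]; rewrite <- comp_assoc;
    [rewrite P1|rewrite P2]; reflexivity.
Qed.

Lemma add_0l (C : PreHilbert) (W Y : Obj C) (g : Hom W Y) : phadd (phz W Y) g = g.
Proof.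
  destruct (bp_exists Y Y) as (B&s1&r1&s2&r2&Hb&_&_).
  pose proof Hb as (E11&E22&E21&E12&_&_).
  destruct (bp_copair_ex Hb (idm Y) (idm Y)) as [c [C1 C2]].
  rewrite (sum_nabla Hb (p := s2 ∘ g) (c := c) (f := phz W Y) (g := g)); auto.
  - rewrite comp_assoc, C2, comp_id_l. reflexivity.
  - rewrite comp_assoc, E12, zr. reflexivity.
  - rewrite comp_assoc, E22, comp_id_l. reflexivity.
Qed.

Lemma add_0r (C : PreHilbert) (W Y : Obj C) (g : Hom W Y) : phadd g (phz W Y) = g.
Proof.
  destruct (bp_exists Y Y) as (B&s1&r1&s2&r2&Hb&_&_).
  pose proof Hb as (E11&E22&E21&E12&_&_).
  destruct (bp_copair_ex Hb (idm Y) (idm Y)) as [c [C1 C2]].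
  rewrite (sum_nabla Hb (p := s1 ∘ g) (c := c) (g := phz W Y) (f := g)); auto.
  - rewrite comp_assoc, C1, comp_id_l. reflexivity.
  - rewrite comp_assoc, E11, comp_id_l. reflexivity.
  - rewrite comp_assoc, E21, zr. reflexivity.
Qed.

Lemma comp_add_r (C : PreHilbert) (V W Y : Obj C) (f g : Hom W Y) (e : Hom V W) :
  phadd f g ∘ e = phadd (f ∘ e) (g ∘ e).
Proof.
  destruct (bp_exists Y Y) as (B&s1&r1&s2&r2&Hb&_&_).
  destruct (bp_copair_ex Hb (idm Y) (idm Y)) as [c [C1 C2]].
  destruct (bp_pair_ex Hb f g) as [p [P1 P2]].
  rewrite (sum_nabla Hb P1 P2 C1 C2).
  rewrite (sum_nabla Hb (p := p ∘ e) (c := c) (f := f ∘ e) (g := g ∘ e)); auto; rewrite ?comp_assoc, ?P1, ?P2; reflexivity.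
Qed.

Lemma comp_add_l (C : PreHilbert) (V W Y : Obj C) (f g : Hom W Y) (k : Hom Y V) :
  k ∘ phadd f g = phadd (k ∘ f) (k ∘ g).
Proof.
  destruct (bp_exists Y Y) as (B&s1&r1&s2&r2&Hb&_&_).
  destruct (bp_copair_ex Hb (idm Y) (idm Y)) as [c [C1 C2]].
  destruct (bp_pair_ex Hb f g) as [p [P1 P2]].
  rewrite (sum_nabla Hb P1 P2 C1 C2).
  rewrite (sum_matrix Hb (a := k) (b := k) (q := k ∘ c) (p := p)); auto;
   rewrite <- ?comp_assoc, ?C1, ?C2, ?comp_id_r; reflexivity.
Qed.

Lemma add_interchange (C : PreHilbert) (X Y : Obj C) (a b c d : Hom X Y) :
  phadd (phadd a b) (phadd c d) = phadd (phadd a c) (phadd b d).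
Proof.
  destruct (bp_exists X X) as (B&s1&r1&s2&r2&Hb&_&_).
  destruct (bp_exists Y Y) as (B'&s1'&r1'&s2'&r2'&Hb'&_&_).
  destruct (bp_pair_ex Hb (idm X) (idm X)) as [D [D1 D2]].
  destruct (bp_copair_ex Hb' (idm Y) (idm Y)) as [n [N1 N2]].
  destruct (bp_copair_ex Hb a b) as [ab [AB1 AB2]].
  destruct (bp_copair_ex Hb c d) as [cd [CD1 CD2]].
  destruct (bp_pair_ex Hb' ab cd) as [M [M1 M2]].
  assert (L1 : phadd a b = ab ∘ D).
  { rewrite <- (sum_matrix Hb AB1 AB2 D1 D2), !comp_id_r. reflexivity. }
  assert (L2 : phadd c d = cd ∘ D).
  { rewrite <- (sum_matrix Hb CD1 CD2 D1 D2), !comp_id_r. reflexivity. }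
  assert (R1 : phadd a c = n ∘ (M ∘ s1)).
  { apply (sum_nabla Hb'); auto; rewrite comp_assoc; [rewrite M1|rewrite M2]; auto. }
  assert (R2 : phadd b d = n ∘ (M ∘ s2)).
  { apply (sum_nabla Hb'); auto; rewrite comp_assoc; [rewrite M1|rewrite M2]; auto. }
  rewrite L1, L2, R1, R2.
  rewrite (sum_nabla Hb' (p := M ∘ D) (c := n) (f := ab ∘ D) (g := cd ∘ D)); auto; [| rewrite comp_assoc, M1; auto | rewrite comp_assoc, M2; auto].
  rewrite !comp_assoc.
  rewrite <- (sum_matrix Hb (u := idm X) (v := idm X) (q := n ∘ M) (p := D) eq_refl eq_refl D1 D2).
  rewrite !comp_id_r. reflexivity.
Qed.

Lemma add_comm (C : PreHilbert) (X Y : Obj C) (b c : Hom X Y) : phadd b c = phadd c b.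
Proof.
  pose proof (add_interchange (phz X Y) b c (phz X Y)) as H.
  rewrite !add_0l, !add_0r in H. exact H.
Qed.

Lemma add_assoc (C : PreHilbert) (X Y : Obj C) (a c d : Hom X Y) :
  phadd a (phadd c d) = phadd (phadd a c) d.
Proof.
  pose proof (add_interchange a (phz X Y) c d) as H.
  rewrite add_0l, add_0r in H. exact H.
Qed.

Lemma star_add (C : PreHilbert) (X Y : Obj C) (f g : Hom X Y) :
  star (phadd f g) = phadd (star f) (star g).
Proof.
  destruct (bp_exists Y Y) as (B&s1&r1&s2&r2&Hb&Hr1&Hr2).
  destruct (bp_copair_ex Hb (idm Y) (idm Y)) as [c [C1 C2]].
  destruct (bp_pair_ex Hb f g) as [p [P1 P2]].
  rewrite (sum_nabla Hb P1 P2 C1 C2), star_comp.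
  rewrite <- (comp_id_r _ _ _ (star f)), <- (comp_id_r _ _ _ (star g)).
  symmetry. apply (sum_matrix Hb).
  - rewrite <- (star_star _ _ _ s1), <- Hr1, <- star_comp, P1. reflexivity.
  - rewrite <- (star_star _ _ _ s2), <- Hr2, <- star_comp, P2. reflexivity.
  - rewrite Hr1, <- star_comp, C1, star_id. reflexivity.
  - rewrite Hr2, <- star_comp, C2, star_id. reflexivity.
Qed.

Lemma kernel_ex (C : PreHilbert) (X Y : Obj C) (f : Hom X Y) :
  exists K (m : Hom K X), (f ∘ m = phz K Y /\
    forall W (g : Hom W X), f ∘ g = phz W Y -> exists h : Hom W K, m ∘ h = g) /\
    star m ∘ m = idm K.
Proof.
  destruct (ph_kernel f) as (K&m&(H1&H2)&H3). exists K, m. split; [split|]; auto.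
  intros W g Hg. destruct (H2 W g Hg) as [h [? _]]. eauto.
Qed.

Lemma aniso (C : PreHilbert) (X Y : Obj C) (x : Hom X Y) :
  star x ∘ x = phz X X -> x = phz X Y.
Proof.
  intros Hx.
  destruct (kernel_ex (star x)) as (K&m&(Hk&Hu)&Hm).
  destruct (Hu X x Hx) as [h Hh].
  assert (Sh : star h = phz K X).
  { rewrite <- Hk, <- Hh, star_comp, <- comp_assoc, Hm, comp_id_r. reflexivity. }
  rewrite <- Hh, <- (star_star _ _ _ h), Sh, zstar, zl. reflexivity.
Qed.

Lemma inv_unique (C : PreHilbert) (X Y : Obj C) (x y a : Hom X Y) :
  phadd x a = phz X Y -> phadd y a = phz X Y -> x = y.
Proof.
  intros H1 H2.
  rewrite <- (add_0r x), <- H2, (add_comm y), add_assoc, H1, add_0l. reflexivity.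
Qed.

Lemma s_star (C : PreHilbert) (X Y : Obj C) (s : Hom X Y) r : r = star s -> s = star r.
Proof. intros ->. rewrite star_star. reflexivity. Qed.

Lemma neg_id (C : PreHilbert) (X : Obj C) : exists n : Hom X X, phadd (idm X) n = phz X X.
Proof.
  destruct (ph_biprod X X) as (B&s1&r1&s2&r2&Horth).
  pose proof Horth as (Hb0&Hr1&Hr2).
  assert (Hb : is_biproduct (@phz C) s1 r1 s2 r2) by exact Hb0.
  apply s_star in Hr1. apply s_star in Hr2.
  destruct (bp_pair_ex Hb (idm X) (idm X)) as [D [D1 D2]].
  destruct (ph_diag Horth D1 D2) as (Z&g&HgD&Hgu).
  destruct (kernel_ex (star D)) as (N&k&(HkD&Hku)&Hkk).
  set (k1 := r1 ∘ k). set (k2 := r2 ∘ k).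
  assert (Ha : phadd k1 k2 = phz N X).
  { rewrite <- HkD, <- (comp_id_l _ _ _ k1), <- (comp_id_l _ _ _ k2).
    apply (sum_matrix Hb); try reflexivity.
    - rewrite Hr1, <- star_comp, D1, star_id. reflexivity.
    - rewrite Hr2, <- star_comp, D2, star_id. reflexivity. }
  assert (Hone : idm N = phadd (star k1 ∘ k1) (star k2 ∘ k2)).
  { rewrite <- Hkk. symmetry. apply (sum_matrix Hb); try reflexivity.
    - rewrite Hr1, <- star_comp. reflexivity.
    - rewrite Hr2, <- star_comp. reflexivity. }
  assert (Hc : forall W (u v : Hom W X), phadd (star k1 ∘ u) (star k2 ∘ v) = phz W N -> u = v).
  { intros W u v Huv.
    destruct (bp_pair_ex Hb u v) as [h [H1 H2]].
    assert (Kh : star k ∘ h = phz W N).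
    { rewrite <- Huv. symmetry. apply (sum_matrix Hb); auto.
      - rewrite Hr1, <- star_comp. reflexivity.
      - rewrite Hr2, <- star_comp. reflexivity. }
    destruct (Hku Z (star g)) as [j Hj].
    { rewrite <- star_comp. change (star (g ∘ D) = phz Z X).
      rewrite HgD. change (star (phz X Z) = phz Z X). apply zstar. }
    destruct (Hgu W h) as [w [Hw _]].
    { rewrite <- (star_star _ _ _ g), <- Hj, star_comp, <- comp_assoc, Kh, zl. reflexivity. }
    rewrite <- H1, <- H2, <- Hw, !comp_assoc, D1, D2. reflexivity. }
  assert (Hmono : forall W (u v : Hom W X), star k1 ∘ u = star k1 ∘ v -> u = v).
  { intros W u v E. apply Hc. rewrite E, <- comp_add_r, <- star_add, Ha, zstar, zr. reflexivity. }
  assert (Heq : star k1 ∘ k1 = star k2 ∘ k2).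
  { apply (inv_unique (a := star k2 ∘ k1)).
    - rewrite <- comp_add_r, <- star_add, Ha, zstar, zr. reflexivity.
    - rewrite <- comp_add_l, add_comm, Ha, zl. reflexivity. }
  set (t := phadd (star k1) (star k1)).
  assert (Ht : k1 ∘ t = idm X).
  { apply Hmono. rewrite comp_assoc. unfold t. rewrite comp_add_l, <- comp_add_r.
    rewrite Heq at 2. rewrite <- Hone, comp_id_l, comp_id_r. reflexivity. }
  exists (k2 ∘ t). rewrite <- Ht, <- comp_add_r, Ha, zr. reflexivity.
Qed.

Lemma neg_ex (C : PreHilbert) (W Y : Obj C) (f : Hom W Y) : exists g, phadd f g = phz W Y.
Proof.
  destruct (neg_id Y) as [n Hn]. exists (n ∘ f).
  rewrite <- (comp_id_l _ _ _ f) at 1. rewrite <- comp_add_r, Hn, zr. reflexivity.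
Qed.
Unset Implicit Arguments.
Set Strict Implicit.

Theorem proposition5p12 (C : PreHilbert) (A : Obj C) :
  (* (1) C(A,A) is an ordered *-ring *)
  is_ordered_star_ring (@phz C A A) (idm A) (@phadd C A A)
    (fun r s : Hom A A => r ∘ s) (@star C A A)
    (fun a : Hom A A => exists (X : Obj C) (x : Hom A X), a = star x ∘ x)
  (* (2) each C(A,X) is an inner product right C(A,A)-module *)
  /\ (forall X : Obj C,
        is_inner_product_module (@phz C A A) (idm A) (@phadd C A A)
          (fun r s : Hom A A => r ∘ s) (@star C A A)
          (fun a : Hom A A => exists (Y : Obj C) (y : Hom A Y), a = star y ∘ y)
          (@phz C A X) (@phadd C A X)
          (fun (x : Hom A X) (r : Hom A A) => x ∘ r)
          (fun x y : Hom A X => star x ∘ y))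
  (* (3) C(A,f) is adjointable with adjoint C(A,f^* ) *)
  /\ (forall (X Y : Obj C) (f : Hom X Y),
        is_adjoint (fun x x' : Hom A X => star x ∘ x')
                   (fun y y' : Hom A Y => star y ∘ y')
                   (fun x : Hom A X => f ∘ x)
                   (fun y : Hom A Y => star f ∘ y))
  (* functoriality of X |-> C(A,X), f |-> C(A,f) *)
  /\ (forall (X : Obj C) (x : Hom A X), idm X ∘ x = x)
  /\ (forall (X Y Z : Obj C) (f : Hom X Y) (g : Hom Y Z) (x : Hom A X),
        (g ∘ f) ∘ x = g ∘ (f ∘ x)).
Proof.
  assert (Hgrp : forall W Y : Obj C, is_abelian_group (phz W Y) (@phadd C W Y)).
  { intros W Y. split; [|split; [|split]].
    - intros; apply add_assoc.
    - intros; apply add_comm.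
    - intros; apply add_0l.
    - intros; apply neg_ex. }
  assert (Hcone : forall X Y (x : Hom A X) (y : Hom A Y),
             exists Z (w : Hom A Z), phadd (star x ∘ x) (star y ∘ y) = star w ∘ w).
  { intros X Y x y.
    destruct (bp_exists X Y) as (B&s1&r1&s2&r2&Hb&Hr1&Hr2).
    apply s_star in Hr1. apply s_star in Hr2.
    destruct (bp_pair_ex Hb x y) as [w [W1 W2]].
    exists B, w. apply (sum_matrix Hb); auto.
    - rewrite Hr1, <- star_comp, W1. reflexivity.
    - rewrite Hr2, <- star_comp, W2. reflexivity. }
  split; [|split; [|split; [|split]]].
  - split; [|split].
    + split; [apply Hgrp|].
      split; [intros; apply comp_assoc|].
      split; [intros; apply comp_id_l|].
      split; [intros; apply comp_id_r|].
      split; [intros; apply comp_add_l|].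
      split; [intros; apply comp_add_r|].
      split; [apply star_id|].
      split; [intros; apply star_comp|].
      split; [intros; apply star_star|].
      intros; apply star_add.
    + intros r Hr. apply aniso. exact Hr.
    + split; [|split; [|split; [|split]]].
      * intros a (X&x&->). rewrite star_comp, star_star. reflexivity.
      * exists A, (idm A). rewrite star_id, comp_id_l. reflexivity.
      * intros a b (X&x&->) (Y&y&->). apply Hcone.
      * intros r a (X&x&->). exists X, (x ∘ r).
        rewrite star_comp, !comp_assoc. reflexivity.
      * intros a b (X&x&->) (Y&y&->) E.
        destruct (bp_exists X Y) as (B&s1&r1&s2&r2&Hb&Hr1&Hr2).
        apply s_star in Hr1. apply s_star in Hr2.
        destruct (bp_pair_ex Hb x y) as [w [W1 W2]].
        assert (Hw : phadd (star x ∘ x) (star y ∘ y) = star w ∘ w).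
        { apply (sum_matrix Hb); auto.
          - rewrite Hr1, <- star_comp, W1. reflexivity.
          - rewrite Hr2, <- star_comp, W2. reflexivity. }
        rewrite Hw in E. apply aniso in E.
        rewrite <- W1, E, zl, zl. reflexivity.
  - intros X. split.
    + split; [apply Hgrp|].
      split; [intros; apply comp_add_r|].
      split; [intros; apply comp_add_l|].
      split; [intros; apply comp_assoc|].
      intros; apply comp_id_r.
    + split; [|split; [|split]].
      * intros x y z r. rewrite comp_add_l, comp_assoc. reflexivity.
      * intros x y. rewrite star_comp, star_star. reflexivity.
      * intros x. exists X, x. reflexivity.
      * intros x Hx. apply aniso. exact Hx.
  - intros X Y f y x. cbv beta. rewrite star_comp, star_star, comp_assoc. reflexivity.
  - intros; apply comp_id_l.
  - intros; symmetry; apply comp_assoc.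
Qed.
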